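(* Let $X$ be an abstract simplicial complex with a simplicial action of a finite group $G$ that restricts to an action on a subcomplex $A$ (not necessarily full). Then there is a $G$-equivariant homotopy equivalence $|X|-|A|\simeq_G|X\ominus A|$.
   Context: Simplicial difference $X\ominus A$: vertices are the simplices of $X$ not in $A$ that are minimal (under inclusion) among simplices of $X$ not in $A$; a finite nonempty set $\{\sigma_0,\dots,\sigma_d\}$ of these is a simplex iff $\sigma_0\cup\dots\cup\sigma_d$ is a simplex of $X$. $G$ acts simplicially on $X\ominus A$ through its action on simplices of $X$, and topologically on $|X|-|A|$ through the realization of the action on $X$. A $G$-homotopy equivalence is a $G$-map admitting a $G$-map inverse up to $G$-equivariant homotopies. *)

(* Defs.v *)
From mathcomp Require Import all_boot all_order all_algebra all_fingroup.
From mathcomp Require Import boolp classical_sets cardinality fsbigop reals.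

Set Implicit Arguments.
Unset Strict Implicit.
Unset Printing Implicit Defensive.

Import Order.TTheory GRing.Theory Num.Theory.
Local Open Scope classical_set_scope.
Local Open Scope ring_scope.

Definition is_simplicial_complex {V : Type} (X : set (set V)) : Prop :=
  (forall s, X s -> finite_set s /\ s !=set0) /\
  (forall s t, X s -> t `<=` s -> t !=set0 -> X t).

Definition is_subcomplex {V : Type} (A X : set (set V)) : Prop :=
  is_simplicial_complex A /\ A `<=` X.

Definition is_group_action {G : finGroupType} {V : Type} (act : G -> V -> V) : Prop :=
  (forall v, act 1%g v = v) /\
  (forall g h v, act (g * h)%g v = act g (act h v)).

Definition preserves_complex {G : finGroupType} {V : Type} (act : G -> V -> V)
  (X : set (set V)) : Prop :=
  forall g s, X s -> X (act g @` s).

Definition simplex_act {G : finGroupType} {V : Type} (act : G -> V -> V)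
  (g : G) (s : set V) : set V := act g @` s.

(** * Geometric realization.
    A point of |X| is a function t : V -> R (barycentric coordinates),
    nonnegative, whose support is a simplex of X, with coordinates summing to 1. *)
Definition supp {R : realType} {V : Type} (t : V -> R) : set V :=
  [set v | t v != 0].

Definition realization {R : realType} {V : choiceType} (X : set (set V)) :
  set (V -> R) :=
  [set t | (forall v, 0 <= t v) /\ X (supp t) /\ \sum_(v \in supp t) t v = 1].

Definition closed_simplex {R : realType} {V : choiceType} (X : set (set V))
  (s : set V) : set (V -> R) :=
  [set t | realization X t /\ supp t `<=` s].

(** U is open in the Euclidean topology of the closed simplex P = |s|
    (coordinates outside s vanish on P, so the sup-distance over s is a metric
    inducing the Euclidean topology). *)
Definition rel_open_simplex {R : realType} {V : Type} (P : set (V -> R))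
  (s : set V) (U : set (V -> R)) : Prop :=
  forall t, P t -> U t -> exists e : R, 0 < e /\
    forall u, P u -> (forall v, s v -> `|u v - t v| < e) -> U u.

(** Open sets of |X| for the weak (coherent) topology: U is open iff its
    intersection with every closed simplex is open in that simplex. *)
Definition realization_open {R : realType} {V : choiceType} (X : set (set V))
  (U : set (V -> R)) : Prop :=
  U `<=` realization X /\
  forall s, X s -> rel_open_simplex (closed_simplex X s) s U.

(** Realization of a simplicial action: g . t = sum_v t_v (g v),
    i.e. (g . t)(w) = t (g^-1 w). *)
Definition real_act {R : realType} {G : finGroupType} {V : Type}
  (act : G -> V -> V) (g : G) (t : V -> R) : V -> R :=
  fun w => t (act (g^-1)%g w).

(** * Lightweight topological spaces: a carrier subset S of a type T together
    with a predicate O of open sets (all contained in S). *)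
Definition sub_open {T : Type} (O : set T -> Prop) (S' : set T) (W : set T) : Prop :=
  exists U, O U /\ W = U `&` S'.

Definition cont {T1 T2 : Type} (S1 : set T1) (O1 : set T1 -> Prop)
  (S2 : set T2) (O2 : set T2 -> Prop) (f : T1 -> T2) : Prop :=
  (forall x, S1 x -> S2 (f x)) /\
  (forall W, O2 W -> O1 (S1 `&` f @^-1` W)).

(** The product [0,1] x S, with the product topology. *)
Definition cyl {R : realType} {T : Type} (S : set T) : set (R * T) :=
  [set p | 0 <= p.1 <= 1 /\ S p.2].

Definition cyl_open {R : realType} {T : Type} (S : set T) (O : set T -> Prop)
  (W : set (R * T)) : Prop :=
  W `<=` cyl S /\
  forall p, W p -> exists e : R, 0 < e /\ exists U, O U /\ U p.2 /\
    forall s x, 0 <= s <= 1 -> `|s - p.1| < e -> U x -> W (s, x).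

Definition equivariant {G : finGroupType} {T1 T2 : Type} (S1 : set T1)
  (a1 : G -> T1 -> T1) (a2 : G -> T2 -> T2) (f : T1 -> T2) : Prop :=
  forall g x, S1 x -> f (a1 g x) = a2 g (f x).

Definition G_homotopic {R : realType} {G : finGroupType} {T1 T2 : Type}
  (S1 : set T1) (O1 : set T1 -> Prop) (a1 : G -> T1 -> T1)
  (S2 : set T2) (O2 : set T2 -> Prop) (a2 : G -> T2 -> T2)
  (f f' : T1 -> T2) : Prop :=
  exists H : R * T1 -> T2,
    cont (cyl S1) (cyl_open S1 O1) S2 O2 H /\
    (forall x, S1 x -> H (0, x) = f x /\ H (1, x) = f' x) /\
    (forall g s x, 0 <= s <= 1 -> S1 x -> H (s, a1 g x) = a2 g (H (s, x))).

Definition G_homotopy_equivalent {R : realType} {G : finGroupType} {T1 T2 : Type}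
  (S1 : set T1) (O1 : set T1 -> Prop) (a1 : G -> T1 -> T1)
  (S2 : set T2) (O2 : set T2 -> Prop) (a2 : G -> T2 -> T2) : Prop :=
  exists (f : T1 -> T2) (h : T2 -> T1),
    cont S1 O1 S2 O2 f /\ cont S2 O2 S1 O1 h /\
    equivariant S1 a1 a2 f /\ equivariant S2 a2 a1 h /\
    @G_homotopic R G T1 T1 S1 O1 a1 S1 O1 a1 (fun x => h (f x)) id /\
    @G_homotopic R G T2 T2 S2 O2 a2 S2 O2 a2 (fun y => f (h y)) id.

Definition sdiff_vertex {V : Type} (X A : set (set V)) (s : set V) : Prop :=
  X s /\ ~ A s /\ (forall t, X t -> ~ A t -> t `<=` s -> t = s).

Definition sdiff {V : Type} (X A : set (set V)) : set (set (set V)) :=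
  [set S | finite_set S /\ S !=set0 /\ S `<=` sdiff_vertex X A /\
           X (\bigcup_(s in S) s)].

Definition diff_space {R : realType} {V : choiceType} (X A : set (set V)) :
  set (V -> R) :=
  realization X `&` ~` realization A.

(* Main.v *)
Require Import Defs.
From mathcomp Require Import all_boot all_order all_algebra all_fingroup.
From mathcomp Require Import boolp classical_sets functions cardinality fsbigop reals.
From mathcomp Require Import topology normedtype.
From mathcomp Require Import lra.
From mathcomp Require finmap.

Set Implicit Arguments.
Unset Strict Implicit.
Unset Printing Implicit Defensive.

Import Order.TTheory GRing.Theory Num.Theory.
Import numFieldNormedType.Exports.
Local Open Scope classical_set_scope.
Local Open Scope ring_scope.


Section Act.
Variables (G : finGroupType) (W : Type) (a : G -> W -> W).
Hypothesis ha : is_group_action a.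

Lemma gactVK g w : a (g^-1)%g (a g w) = w.
Proof. by case: ha => h1 hM; rewrite -hM mulVg h1. Qed.
Lemma gactKV g w : a g (a (g^-1)%g w) = w.
Proof. by case: ha => h1 hM; rewrite -hM mulgV h1. Qed.
Lemma gact_inj g : injective (a g).
Proof. exact: (can_inj (gactVK g)). Qed.
Lemma gimage_actE g (s : set W) w : (a g @` s) w <-> s (a (g^-1)%g w).
Proof.
split => [[y sy <-]|sw]; first by rewrite gactVK.
by exists (a (g^-1)%g w) => //; rewrite gactKV.
Qed.
Lemma gimage_actK g (s : set W) : a (g^-1)%g @` (a g @` s) = s.
Proof.
apply/seteqP; split => w.
  by move=> /gimage_actE; rewrite invgK => /gimage_actE; rewrite gactVK.
by move=> sw; apply/gimage_actE; rewrite invgK; apply/gimage_actE; rewrite gactVK.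
Qed.
End Act.

Lemma simplex_act_ga (G : finGroupType) (V : Type) (act : G -> V -> V) :
  is_group_action act -> is_group_action (simplex_act act).
Proof.
move=> ha; have [h1 hM] := ha; split.
  move=> s; rewrite /simplex_act; apply/seteqP; split => x.
    by case=> y sy <-; rewrite h1.
  by move=> sx; exists x => //; rewrite h1.
move=> g h s; rewrite /simplex_act; apply/seteqP; split => x.
  by case=> y sy <-; rewrite hM; exists (act h y) => //; exists y.
by case=> y [z sz <-] <-; exists z => //; rewrite hM.
Qed.

Lemma supp_real_act (R : realType) (G : finGroupType) (W : Type)
  (a : G -> W -> W) (ha : is_group_action a) g (t : W -> R) :
  supp (real_act a g t) = a g @` supp t.
Proof.
apply/seteqP; split => w.
  by rewrite /supp /real_act /= => h; apply/(gimage_actE ha).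
by move=> /(gimage_actE ha).
Qed.

Section Conv.
Variables (R : realType) (W : choiceType).

Definition conv (s : R) (x y : W -> R) : W -> R := fun v => (1 - s) * x v + s * y v.

Lemma supp_ge0 (x : W -> R) v : (forall v, 0 <= x v) -> supp x v -> 0 < x v.
Proof. by move=> h; rewrite /supp /= => hv; rewrite lt_neqAle eq_sym hv h. Qed.

Lemma sum_widen1 (K : set (set W)) (x : W -> R) (s : set W) :
  realization K x -> finite_set s -> supp x `<=` s -> \sum_(v \in s) x v = 1.
Proof.
move=> [_ [_ h1]] fs hs; rewrite -h1; apply/esym/fsbig_widen => // v [_].
by rewrite /supp /= => /negP; rewrite negbK => /eqP.
Qed.

Lemma conv_real (K : set (set W)) (sg : set W) (s : R) (x y : W -> R) :
  is_simplicial_complex K -> K sg -> 0 <= s <= 1 ->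
  closed_simplex K sg x -> closed_simplex K sg y ->
  [/\ realization K (conv s x y), supp (conv s x y) `<=` sg,
      (s < 1 -> supp x `<=` supp (conv s x y)) &
      (0 < s -> supp y `<=` supp (conv s x y))].
Proof.
move=> [hK1 hK2] Ksg /andP[s0 s1] [rx sx] [ry sy].
have [x0 [Kx x1]] := rx; have [y0 [Ky y1]] := ry.
have c0 v : 0 <= conv s x y v.
  by rewrite /conv addr_ge0 // mulr_ge0 // subr_ge0.
have ssub : supp (conv s x y) `<=` sg.
  move=> v; rewrite /supp /= => /eqP hv; have [//|nv] := pselect (sg v); exfalso.
  apply: hv; rewrite /conv.
  have xv : x v = 0 by have [//|h] := eqVneq (x v) 0; exfalso; apply/nv/sx.
  have yv : y v = 0 by have [//|h] := eqVneq (y v) 0; exfalso; apply/nv/sy.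
  by rewrite xv yv !mulr0 addr0.
have hx : s < 1 -> supp x `<=` supp (conv s x y).
  move=> hs v /(supp_ge0 x0) xv; rewrite /supp /conv /=.
  have : 0 < (1 - s) * x v by rewrite mulr_gt0 // subr_gt0.
  have : 0 <= s * y v by rewrite mulr_ge0.
  move=> h1 h2; rewrite gt_eqF //; lra.
have hy : 0 < s -> supp y `<=` supp (conv s x y).
  move=> hs v /(supp_ge0 y0) yv; rewrite /supp /conv /=.
  have : 0 < s * y v by rewrite mulr_gt0.
  have : 0 <= (1 - s) * x v by rewrite mulr_ge0 // subr_ge0.
  move=> h1 h2; rewrite gt_eqF //; lra.
have fsg : finite_set sg by case: (hK1 _ Ksg).
split => //; split => //; split.
  apply: (hK2 _ _ Ksg ssub).
  have [hs|hs] := ltP s 1.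
    by have [v xv] := (hK1 _ Kx).2; exists v; apply: hx.
  have hs0 : 0 < s by lra.
  by have [v yv] := (hK1 _ Ky).2; exists v; apply: hy.
rewrite (fsbig_widen _ sg) //; last first.
  by move=> v [_]; rewrite /supp /= => /negP; rewrite negbK => /eqP.
rewrite /conv fsbig_split // -!mulr_fsumr.
rewrite (sum_widen1 rx) // (sum_widen1 ry) //= !mulr1 subrK. all: done.
Qed.
End Conv.

Lemma fsum_ge_term (R : realType) (I : choiceType) (P : set I) (F : I -> R) i :
  finite_set P -> P i -> (forall j, P j -> 0 <= F j) -> F i <= \sum_(j \in P) F j.
Proof.
move=> fP Pi F0; rewrite (fsbigD1 i) //=.
have : 0 <= \sum_(j \in P `\ i) F j by apply: fsumr_ge0 => j [] /F0.
lra.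
Qed.

Module PowFin.
Import finmap.


Lemma pow_fin (V : choiceType) (s : set V) :
  finite_set s -> finite_set [set r : set V | r `<=` s].
Proof.
move=> fs.
pose B := (fun F => [set` F]) @` [set` finmap.fpowerset (fset_set s)].
have fB : finite_set B by apply: finite_image; apply: finite_fset.
apply: (sub_finite_set _ fB).
move=> r /= rs; have fr : finite_set r by apply: sub_finite_set fs.
exists (fset_set r); last by rewrite fset_setK.
by rewrite /= finmap.fpowersetE -fset_set_sub.
Qed.

Lemma proper_size (V : choiceType) (t s : set V) : finite_set s ->
  t `<=` s -> t <> s ->
  (size (finmap.enum_fset (fset_set t)) < size (finmap.enum_fset (fset_set s)))%N.
Proof.
move=> fs ts nts; have ft : finite_set t by apply: sub_finite_set fs.
apply: finmap.fproper_ltn_card; rewrite finmap.fproperEneq; apply/andP; split.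
  by apply/eqP => /(fset_set_inj ft fs).
by rewrite -(fset_set_sub ft fs).
Qed.


End PowFin.
Import PowFin.


Section Fil.
Variable R : realType.

Definition fil (T : Type) (C : R -> set T) : set_system T :=
  filter_from [set d : R | 0 < d] C.

Lemma fil_filter (T : Type) (C : R -> set T) :
  (forall d1 d2, 0 < d1 -> d1 <= d2 -> C d1 `<=` C d2) -> Filter (fil C).
Proof.
move=> mon; apply: filter_from_filter.
  by exists 1; rewrite /= ltr01.
move=> i j i0 j0; have i0' : 0 < i by []; have j0' : 0 < j by [].
have m0 : 0 < Num.min i j by rewrite lt_min i0' j0'.
exists (Num.min i j); first exact: m0.
move=> t Ct; split.
  by apply: (mon _ _ m0 _ _ Ct); rewrite ge_min lexx.
by apply: (mon _ _ m0 _ _ Ct); rewrite ge_min lexx orbT.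
Qed.

Lemma cvg_bigsum_seq (T : Type) (F : set_system T) {FF : Filter F}
  (I : Type) (s : seq I) (f : I -> T -> R) (l : I -> R) :
  (forall i, f i @ F --> l i) ->
  (fun t => \sum_(i <- s) f i t) @ F --> \sum_(i <- s) l i.
Proof.
move=> h; elim: s => [|i s IH].
  under eq_fun do rewrite big_nil; rewrite big_nil; exact: cvg_cst.
under eq_fun do rewrite big_cons; rewrite big_cons; exact: cvgD.
Qed.

Lemma cvg_bigprod_seq (T : Type) (F : set_system T) {FF : Filter F}
  (I : Type) (s : seq I) (f : I -> T -> R) (l : I -> R) :
  (forall i, f i @ F --> l i) ->
  (fun t => \prod_(i <- s) f i t) @ F --> \prod_(i <- s) l i.
Proof.
move=> h; elim: s => [|i s IH].
  under eq_fun do rewrite big_nil; rewrite big_nil; exact: cvg_cst.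
under eq_fun do rewrite big_cons; rewrite big_cons; exact: cvgM.
Qed.

Lemma conv_cvg (T : Type) (F : set_system T) {FF : Filter F}
  (a b c : T -> R) (a0 b0 c0 : R) :
  a @ F --> a0 -> b @ F --> b0 -> c @ F --> c0 ->
  (fun t => (1 - a t) * b t + a t * c t) @ F --> (1 - a0) * b0 + a0 * c0.
Proof.
move=> ha hb hc.
apply: cvgD; apply: cvgM => //.
by apply: cvgB => //; exact: cvg_cst.
Qed.

Lemma finite_near (T : Type) (F : set_system T) {FF : Filter F}
  (I : choiceType) (s : set I) (Q : I -> T -> Prop) :
  finite_set s -> (forall i, s i -> \forall t \near F, Q i t) ->
  \forall t \near F, forall i, s i -> Q i t.
Proof.
move=> /finite_seqP [l ->] {s}.
elim: l => [|i l IH] h.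
  by apply: filterS filterT => t _ i.
have h1 : \forall t \near F, Q i t by apply: h; rewrite /= inE eqxx.
have h2 : \forall t \near F, forall j, [set` l] j -> Q j t.
  by apply: IH => j lj; apply: h; rewrite /= inE lj orbT.
apply: filterS (filterI h1 h2) => t [q1 q2] j; rewrite /= inE => /orP[/eqP->//|lj].
exact: q2.
Qed.


End Fil.

Section Gen.
Variables (R : realType) (W1 W2 : choiceType)
  (K1 : set (set W1)) (K2 : set (set W2)).
Hypotheses (hK1 : is_simplicial_complex K1) (hK2 : is_simplicial_complex K2).

Definition ballP (P : set (W1 -> R)) (sg : set W1) (x : W1 -> R) (d : R) :
  set (W1 -> R) := [set y | P y /\ forall v, sg v -> `|y v - x v| < d].

Definition cballP (P : set (W1 -> R)) (sg : set W1) (s : R) (x : W1 -> R)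
  (d : R) : set (R * (W1 -> R)) :=
  [set p | 0 <= p.1 <= 1 /\ P p.2 /\ `|p.1 - s| < d /\
           forall v, sg v -> `|p.2 v - x v| < d].

Lemma ballP_filter P sg x : Filter (fil (ballP P sg x)).
Proof.
apply: fil_filter => d1 d2 _ d12 y [Py hy]; split => // v sv.
exact: (lt_le_trans (hy v sv)).
Qed.

Lemma cballP_filter P sg s x : Filter (fil (cballP P sg s x)).
Proof.
apply: fil_filter => d1 d2 _ d12 y [y01 [Py [hs hy]]]; split => //; split => //.
split; first exact: (lt_le_trans hs).
by move=> v sv; exact: (lt_le_trans (hy v sv)).
Qed.

Lemma cl_real sg (x : W1 -> R) : closed_simplex K1 sg x -> realization K1 x.
Proof. by case. Qed.

Lemma cl_supp0 sg (x : W1 -> R) v : closed_simplex K1 sg x -> ~ sg v -> x v = 0.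
Proof.
move=> [_ xs] nv; have [//|xv] := eqVneq (x v) 0.
by exfalso; apply: nv; apply: xs; rewrite /supp /= xv.
Qed.

Lemma ballP_coord P sg x v : P `<=` closed_simplex K1 sg ->
  closed_simplex K1 sg x ->
  (fun y : W1 -> R => y v) @ fil (ballP P sg x) --> x v.
Proof.
move=> PC xC; have FF := ballP_filter P sg x.
apply/cvgrPdist_lt => e e0; exists e => // y [Py hy].
have [sv|nsv] := pselect (sg v); first by rewrite distrC; apply: hy.
by rewrite (cl_supp0 xC nsv) (cl_supp0 (PC _ Py) nsv) subrr normr0.
Qed.

Lemma ballP_supp P sg x : P `<=` closed_simplex K1 sg ->
  \forall y \near fil (ballP P sg x), supp y `<=` sg.
Proof. by move=> PC; exists 1 => //= y [/PC [_ ys] _]. Qed.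

Lemma cballP_coord P sg s x v : P `<=` closed_simplex K1 sg ->
  closed_simplex K1 sg x ->
  (fun p : R * (W1 -> R) => p.2 v) @ fil (cballP P sg s x) --> x v.
Proof.
move=> PC xC; have FF := cballP_filter P sg s x.
apply/cvgrPdist_lt => e e0; exists e => // p [_ [Pp [_ hy]]].
have [sv|nsv] := pselect (sg v); first by rewrite distrC; apply: hy.
by rewrite (cl_supp0 xC nsv) (cl_supp0 (PC _ Pp) nsv) subrr normr0.
Qed.

Lemma cballP_fst P sg s x :
  (fun p : R * (W1 -> R) => p.1) @ fil (cballP P sg s x) --> s.
Proof.
have FF := cballP_filter P sg s x.
apply/cvgrPdist_lt => e e0; exists e => // p [_ [_ [hs _]]].
by rewrite distrC.
Qed.

Lemma cballP_supp P sg s x : P `<=` closed_simplex K1 sg ->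
  \forall p \near fil (cballP P sg s x), supp p.2 `<=` sg.
Proof. by move=> PC; exists 1 => //= p [_ [/PC [_ ys] _]]. Qed.

Lemma cballP_in P sg s x :
  \forall p \near fil (cballP P sg s x), P p.2 /\ 0 <= p.1 <= 1.
Proof. by exists 1 => //= p [? [? _]]. Qed.

Lemma ballP_in P sg x : \forall y \near fil (ballP P sg x), P y.
Proof. by exists 1 => //= p []. Qed.

Lemma real_supp_cl (x : W1 -> R) : realization K1 x -> closed_simplex K1 (supp x) x.
Proof. by move=> rx; split. Qed.

Lemma cont_gen (S1 : set (W1 -> R)) (S2 : set (W2 -> R))
  (F : (W1 -> R) -> (W2 -> R)) :
  S1 `<=` realization K1 ->
  (forall sg x, K1 sg -> S1 x -> closed_simplex K1 sg x ->
     exists2 d : R, 0 < d & forall y, closed_simplex K1 sg y ->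
       (forall v, sg v -> `|y v - x v| < d) -> S1 y) ->
  S2 `<=` realization K2 ->
  (forall x, S1 x -> S2 (F x)) ->
  (forall sg x, K1 sg -> S1 x -> closed_simplex K1 sg x ->
     exists sg', K2 sg' /\ forall y, S1 y -> closed_simplex K1 sg y ->
       supp (F y) `<=` sg') ->
  (forall sg x, K1 sg -> S1 x -> closed_simplex K1 sg x -> forall w,
     (fun y => F y w) @ fil (ballP (S1 `&` closed_simplex K1 sg) sg x)
       --> F x w) ->
  cont S1 (sub_open (realization_open K1) S1) S2
    (sub_open (realization_open K2) S2) F.
Proof.
move=> hS1 hS1o hS2 hmap himg hcvg; split; first exact: hmap.
move=> W [U [[UK2 Uop] ->]].
exists (S1 `&` F @^-1` (U `&` S2)); split; last first.
  by apply/seteqP; split => x; [move=> [S1x h]; split | move=> [[]]].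
split; first by move=> x [/hS1].
move=> sg Ksg x xcl [S1x [Ux S2x]].
have [sg' [Ksg' hsupp]] := himg sg x Ksg S1x xcl.
have Fxcl : closed_simplex K2 sg' (F x) by split; [exact: hS2 | exact: hsupp].
have [e [e0 he]] := Uop sg' Ksg' (F x) Fxcl Ux.
have fsg' : finite_set sg' by case: (hK2.1 _ Ksg').
have FF := ballP_filter (S1 `&` closed_simplex K1 sg) sg x.
have hn : \forall y \near fil (ballP (S1 `&` closed_simplex K1 sg) sg x),
    forall w, sg' w -> `|F y w - F x w| < e.
  apply: finite_near => // w _.
  have := hcvg sg x Ksg S1x xcl w; move/cvgrPdist_lt => /(_ e e0).
  by apply: filterS => y; rewrite distrC.
have [d d0 hd] := hn.
have [d' d'0 hd'] := hS1o sg x Ksg S1x xcl.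
have m0 : 0 < Num.min d d' by rewrite lt_min d0 d'0.
exists (Num.min d d'); split => // y ycl hy.
have S1y : S1 y.
  by apply: hd' => // v sv; have := hy v sv; rewrite lt_min => /andP[].
have hy2 : forall w, sg' w -> `|F y w - F x w| < e.
  apply: hd; split => // v sv; have := hy v sv; rewrite lt_min => /andP[].
  by [].
have Fycl : closed_simplex K2 sg' (F y).
  by split; [apply: hS2; exact: hmap | exact: hsupp].
split => //; split; [exact: he | exact: hmap].
Qed.


Section Cyl.
Variables (S1 : set (W1 -> R)) (S2 : set (W2 -> R))
  (H : R * (W1 -> R) -> (W2 -> R)).
Hypotheses (hS1 : S1 `<=` realization K1)
  (hS1o : forall sg x, K1 sg -> S1 x -> closed_simplex K1 sg x ->
     exists2 d : R, 0 < d & forall y, closed_simplex K1 sg y ->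
       (forall v, sg v -> `|y v - x v| < d) -> S1 y)
  (hS2 : S2 `<=` realization K2)
  (hmap : forall s x, 0 <= s <= 1 -> S1 x -> S2 (H (s, x)))
  (himg : forall sg x, K1 sg -> S1 x -> closed_simplex K1 sg x ->
     exists sg', K2 sg' /\ forall s y, 0 <= s <= 1 -> S1 y ->
       closed_simplex K1 sg y -> supp (H (s, y)) `<=` sg')
  (hcvg : forall sg s x, K1 sg -> 0 <= s <= 1 -> S1 x ->
     closed_simplex K1 sg x -> forall w,
     (fun p => H p w) @ fil (cballP (S1 `&` closed_simplex K1 sg) sg s x)
       --> H (s, x) w).

Lemma local_box (U : set (W2 -> R)) sg s x :
  realization_open K2 U -> K1 sg -> 0 <= s <= 1 -> S1 x ->
  closed_simplex K1 sg x -> U (H (s, x)) ->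
  exists2 d : R, 0 < d & forall s' y, 0 <= s' <= 1 -> S1 y ->
    closed_simplex K1 sg y -> `|s' - s| < d ->
    (forall v, sg v -> `|y v - x v| < d) -> U (H (s', y)).
Proof.
move=> [UK2 Uop] Ksg s01 S1x xcl Ux.
have [sg' [Ksg' hsupp]] := himg Ksg S1x xcl.
have Hcl s' y : 0 <= s' <= 1 -> S1 y -> closed_simplex K1 sg y ->
    closed_simplex K2 sg' (H (s', y)).
  by move=> s'01 S1y ycl; split; [apply: hS2; exact: hmap | exact: hsupp].
have [e [e0 he]] := Uop sg' Ksg' _ (Hcl _ _ s01 S1x xcl) Ux.
have fsg' : finite_set sg' by case: (hK2.1 _ Ksg').
have FF := cballP_filter (S1 `&` closed_simplex K1 sg) sg s x.
have hn : \forall p \near fil (cballP (S1 `&` closed_simplex K1 sg) sg s x),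
    forall w, sg' w -> `|H p w - H (s, x) w| < e.
  apply: finite_near => // w _.
  have := (hcvg (w:=w) Ksg s01 S1x xcl); move/cvgrPdist_lt => /(_ e e0).
  by apply: filterS => y; rewrite distrC.
have [d d0 hd] := hn.
exists d => // s' y s'01 S1y ycl hs hy.
apply: (he _ (Hcl _ _ s'01 S1y ycl)).
by apply: (hd (s', y)); split => //; split.
Qed.

Lemma cyl_gen :
  cont (cyl S1) (cyl_open S1 (sub_open (realization_open K1) S1)) S2
    (sub_open (realization_open K2) S2) H.
Proof.
split; first by move=> [s x] [/= s01 S1x]; apply: hmap.
move=> W [U [Uop ->]].
split; first by move=> p [].
move=> [s0 x0] [[/= s01 S1x0] [Ux0 _]].
have rx0 := hS1 S1x0.
have Ks0 : K1 (supp x0) by case: rx0 => _ [].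
have x0cl := real_supp_cl rx0.
have [d0 d00 hd0] := local_box Uop Ks0 s01 S1x0 x0cl Ux0.
pose e := d0 / 2.
have e0 : 0 < e by rewrite /e divr_gt0.
have ed0 : e < d0 by rewrite /e; lra.
pose U1 := [set x | S1 x /\ forall s, 0 <= s <= 1 -> `|s - s0| <= e -> U (H (s, x))].
exists e; split => //; exists U1; split; last split.
- exists U1; split; last first.
    by apply/seteqP; split => x; [move=> U1x; split => //; case: U1x | case].
  split; first by move=> x [/hS1].
  move=> sg Ksg x1 x1cl [S1x1 hx1].
  pose P (d : R) (s : R) := 0 <= s <= 1 -> forall y, S1 y ->
    closed_simplex K1 sg y -> (forall v, sg v -> `|y v - x1 v| < d) ->
    U (H (s, y)).
  have cov : \forall d \near 0^'+, `[s0 - e, s0 + e] `<=` P d.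
    apply: ((compact_near_coveringP _).1 (@segment_compact R (s0 - e) (s0 + e)) R (0^'+) P _).
    move=> s; rewrite /= in_itv /= => /andP[hs1 hs2].
    have [s01'|ns01] := pselect (0 <= s <= 1).
      have hse : `|s - s0| <= e by rewrite ler_norml; apply/andP; split; lra.
      have [d1 d10 hd1] := local_box Uop Ksg s01' S1x1 x1cl (hx1 s s01' hse).
      rewrite /prop_near2 /=.
      exists (ball s d1, [set d | 0 < d < d1]) => /=.
        split; first exact: nbhsx_ballx.
        rewrite /at_right /within /=; exists d1 => // d /= hd dd0.
        rewrite dd0 /=; move: hd; rewrite /ball /= sub0r normrN gtr0_norm //.
      move=> [s' d] [/= hs' /andP[dd0 hd1']] s'01 y S1y ycl hy.
      apply: hd1 => //; first by rewrite distrC.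
      by move=> v sv; apply: (lt_trans (hy v sv)).
    have hs : s < 0 \/ 1 < s.
      move: ns01; case: (ltP s 0) => hs; first by left.
      case: (ltP 1 s) => hs'; first by right.
      by move=> h; exfalso; apply: h; apply/andP.
    have ds0 : 0 < (`|s| + `|s - 1| - 1) / 2.
      case: hs => hs.
        rewrite ltr0_norm // ltr0_norm; lra.
      rewrite gtr0_norm; last lra.
      rewrite gtr0_norm; lra.
    rewrite /prop_near2 /=.
    exists (ball s ((`|s| + `|s - 1| - 1) / 2), setT) => /=.
      by split; [exact: nbhsx_ballx | exact: filterT].
    move=> [s' d] [/= hs' _] /andP[s'0 s'1]; exfalso.
    move: hs'; rewrite /ball /=.
    case: hs => hs.
      rewrite (ltr0_norm hs) (ltr0_norm (_ : s - 1 < 0)); last lra.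
      rewrite ltr_norml => /andP[h1 h2]; lra.
    rewrite (gtr0_norm (_ : 0 < s)); last lra.
    rewrite (gtr0_norm (_ : 0 < s - 1)); last lra.
    rewrite ltr_norml => /andP[h1 h2]; lra.
  move: cov; rewrite /prop_near1 /at_right /within /= => -[d1 /= d10 hd1].
  have [d2 d20 hd2] := hS1o Ksg S1x1 x1cl.
  pose d := Num.min (d1 / 2) d2.
  have dpos : 0 < d by rewrite /d lt_min d20 andbT divr_gt0.
  exists d; split => // y ycl hy.
  have S1y : S1 y.
    apply: hd2 => // v sv; have := hy v sv; rewrite /d lt_min => /andP[].
    by [].
  split => // s s01' hse.
  have hP : P (d1 / 2) s.
    apply: hd1.
    - by rewrite /ball /= sub0r normrN gtr0_norm ?divr_gt0 //; lra.
    - by rewrite divr_gt0.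
    - rewrite /= in_itv /=; move: hse; rewrite ler_norml => /andP[h1 h2].
      by apply/andP; split; lra.
  apply: hP => // v sv; have := hy v sv; rewrite /d lt_min => /andP[].
  by [].
- split => // s s01' hse.
  apply: hd0 => //; first exact: (le_lt_trans hse).
  by move=> v _; rewrite subrr normr0.
- move=> s x s01' hs [S1x hx]; split; first by split.
  split; last exact: hmap.
  by apply: hx => //; apply: ltW.
Qed.
End Cyl.

End Gen.

Existing Instance ballP_filter.
Existing Instance cballP_filter.


Section Main.
Variables (R : realType) (V : choiceType) (G : finGroupType)
  (X A : set (set V)) (act : G -> V -> V).
Hypotheses (hX : is_simplicial_complex X) (hA : is_subcomplex A X)
  (hG : is_group_action act) (hPX : preserves_complex act X)
  (hPA : preserves_complex act A).

Definition VV := sdiff_vertex X A.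

Definition mm (rho : set V) (t : V -> R) : R :=
  if `[< VV rho >] then \big[*%R/1]_(v \in rho) t v else 0.
Definition DD (t : V -> R) : R := \sum_(rho \in [set: set V]) mm rho t.
Definition ff (t : V -> R) : set V -> R := fun rho => mm rho t / DD t.
Definition cardr (rho : set V) : R := \sum_(v \in rho) (1 : R).
Definition bc (rho : set V) (v : V) : R :=
  if `[< rho v >] then (cardr rho)^-1 else 0.
Definition hh (T : set V -> R) : V -> R :=
  fun v => \sum_(rho \in supp T) T rho * bc rho v.

Lemma VV_X r : VV r -> X r. Proof. by case. Qed.
Lemma VV_nA r : VV r -> ~ A r. Proof. by case=> _ []. Qed.
Lemma VV_fin r : VV r -> finite_set r.
Proof. by move=> Vr; case: (hX.1 _ (VV_X Vr)). Qed.
Lemma VV_n0 r : VV r -> r !=set0.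
Proof. by move=> Vr; case: (hX.1 _ (VV_X Vr)). Qed.

Lemma A_face s t : A s -> t `<=` s -> t !=set0 -> A t.
Proof. by move=> As ts t0; apply: (hA.1.2 s). Qed.

Lemma X_fin s : X s -> finite_set s. Proof. by move=> Xs; case: (hX.1 _ Xs). Qed.

Lemma exists_VV s : X s -> ~ A s -> exists r, VV r /\ r `<=` s.
Proof.
move=> Xs nAs.
have [n hn] : exists n, (size (finmap.enum_fset (fset_set s)) <= n)%N by exists (size (finmap.enum_fset (fset_set s))).
elim: n s Xs nAs hn => [|n IH] s Xs nAs hn;
  (have [[t [Xt [nAt [ts nts]]]]|no] :=
     pselect (exists t, X t /\ ~ A t /\ t `<=` s /\ t <> s)).
- have h := proper_size (X_fin Xs) ts nts.
  by have := leq_trans h hn; rewrite ltn0.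
- exists s; split => //; split => //; split => // t Xt nAt ts.
  by apply: contrapT => nts; apply: no; exists t.
- have h := proper_size (X_fin Xs) ts nts.
  have [r [Vr rt]] := IH t Xt nAt (leq_trans (ltnSE (leq_trans h hn)) (leqnn _)).
  by exists r; split => //; apply: subset_trans ts.
- exists s; split => //; split => //; split => // t Xt nAt ts.
  by apply: contrapT => nts; apply: no; exists t.
Qed.

Lemma not_supp (W : Type) (t : W -> R) v : ~ supp t v -> t v = 0.
Proof. by move=> h; have [//|tv] := eqVneq (t v) 0; exfalso; apply: h. Qed.

Lemma not_subset_ex (r s : set V) : ~ (r `<=` s) -> exists v, r v /\ ~ s v.
Proof.
move=> h; apply: contrapT => nh; apply: h => v rv; apply: contrapT => nsv.
by apply: nh; exists v.
Qed.

Lemma mm_eq0 r t : ~ (r `<=` supp t) -> mm r t = 0.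
Proof.
rewrite /mm; case: asboolP => // Vr /not_subset_ex [v [rv ntv]].
have tv := not_supp ntv.
by rewrite (fsbigD1 v) //= ?tv ?mul0r //; apply: VV_fin.
Qed.

Lemma mm_ge0 r t : (forall v, 0 <= t v) -> 0 <= mm r t.
Proof.
move=> t0; rewrite /mm; case: asboolP => // Vr.
by rewrite fsbig_finite ?prodr_ge0 //; apply: VV_fin.
Qed.

Lemma mm_gt0 r t : (forall v, 0 <= t v) -> VV r -> r `<=` supp t -> 0 < mm r t.
Proof.
move=> t0 Vr rt; rewrite /mm; case: asboolP => // _.
rewrite fsbig_finite; last exact: VV_fin.
rewrite big_seq prodr_gt0 // => v; rewrite in_fset_set; last exact: VV_fin.
by rewrite inE => rv; apply: supp_ge0 => //; apply: rt.
Qed.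

Lemma mm_neq0 r t : mm r t != 0 -> VV r /\ r `<=` supp t.
Proof.
move=> h; split; first by move: h; rewrite /mm; case: asboolP => //; rewrite eqxx.
by apply: contrapT => nr; move: h; rewrite mm_eq0 // eqxx.
Qed.

Lemma DD_expand (t : V -> R) (s : set V) : finite_set s -> supp t `<=` s ->
  DD t = \sum_(r \in [set r : set V | r `<=` s]) mm r t.
Proof.
move=> fs ts; rewrite /DD; apply/esym/fsbig_widen => // r [_ nrs].
by apply: mm_eq0 => h; apply: nrs; apply: subset_trans h ts.
Qed.

Lemma real_X (K : set (set V)) (t : V -> R) : realization K t -> K (supp t).
Proof. by case=> _ []. Qed.

Lemma diff_nA (t : V -> R) : diff_space X A t -> ~ A (supp t).
Proof.
move=> [[t0 [Xt s1]] nAt] At; apply: nAt; split => //.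
Qed.

Lemma diff_fin (t : V -> R) : diff_space X A t -> finite_set (supp t).
Proof. by move=> [rt _]; apply: X_fin; apply: real_X rt. Qed.

Lemma DD_gt0 (t : V -> R) : diff_space X A t -> 0 < DD t.
Proof.
move=> dt; have [rt _] := dt; have [t0 _] := rt.
have [r [Vr rs]] := exists_VV (real_X rt) (diff_nA dt).
have fs := diff_fin dt.
rewrite (DD_expand (fs) (subset_refl _)).
apply: (lt_le_trans (mm_gt0 t0 Vr rs)); apply: (@fsum_ge_term R _ [set r0 | r0 `<=` supp t] (fun r => mm r t) r).
- exact: pow_fin.
- exact: rs.
- by move=> j _; apply: mm_ge0.
by [].
Qed.

Lemma supp_ff (t : V -> R) : diff_space X A t ->
  supp (ff t) = [set r | VV r /\ r `<=` supp t].
Proof.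
move=> dt; have D0 := DD_gt0 dt; have [[t0 _] _] := dt.
apply/seteqP; split => r.
  rewrite /supp /ff /= => h; apply: mm_neq0; apply: contraNN h => /eqP ->.
  by rewrite mul0r.
move=> [Vr rs]; rewrite /supp /ff /=.
by rewrite gt_eqF // divr_gt0 // mm_gt0.
Qed.

Lemma ff_ge0 (t : V -> R) r : diff_space X A t -> 0 <= ff t r.
Proof.
move=> dt; have [[t0 _] _] := dt.
by rewrite /ff divr_ge0 ?mm_ge0 // ltW // DD_gt0.
Qed.

Lemma ff_sum (t : V -> R) : diff_space X A t -> \sum_(r \in supp (ff t)) ff t r = 1.
Proof.
move=> dt; rewrite (fsbig_widen _ [set: set V]) //; last first.
  by move=> r [_ h]; apply: not_supp h.
by rewrite /ff -mulr_fsuml -/(DD t) divff // gt_eqF // DD_gt0.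
Qed.

Lemma sdiff_cl (S : set (set V)) : finite_set S -> S !=set0 -> S `<=` VV ->
  (exists s, X s /\ \bigcup_(r in S) r `<=` s) -> sdiff X A S.
Proof.
move=> fS S0 SV [s [Xs Us]]; split => //; split => //; split => //.
apply: (hX.2 _ _ Xs Us).
have [r Sr] := S0; have [v rv] := VV_n0 (SV _ Sr).
by exists v; exists r.
Qed.

Lemma ff_real (t : V -> R) : diff_space X A t -> realization (sdiff X A) (ff t).
Proof.
move=> dt; split; first by move=> r; apply: ff_ge0.
split; last exact: ff_sum.
have [rt _] := dt.
rewrite supp_ff //; apply: sdiff_cl.
- apply: (sub_finite_set _ (pow_fin (diff_fin dt))) => r [].
  by move=> _ h; exact: h.
- by have [r [Vr rs]] := exists_VV (real_X rt) (diff_nA dt); exists r.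
- by move=> r [].
- by exists (supp t); split; [apply: real_X rt | move=> v [r [_ rs] rv]; apply: rs].
Qed.

Lemma cardr_gt0 r : finite_set r -> r !=set0 -> 0 < cardr r.
Proof.
move=> fr [v rv]; apply: (@lt_le_trans _ _ 1) => //.
by apply: (@fsum_ge_term R V r (fun=> 1) v).
Qed.

Lemma bc_ge0 r v : 0 <= bc r v.
Proof.
rewrite /bc; case: asboolP => // _; rewrite invr_ge0.
by apply: fsumr_ge0.
Qed.

Lemma bc_gt0 r v : finite_set r -> r v -> 0 < bc r v.
Proof.
move=> fr rv; rewrite /bc; case: asboolP => // _.
by rewrite invr_gt0 cardr_gt0 //; exists v.
Qed.

Lemma sum_bc r (s : set V) : finite_set s -> r `<=` s -> r !=set0 ->
  \sum_(v \in s) bc r v = 1.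
Proof.
move=> fs rs r0; have fr : finite_set r by apply: sub_finite_set fs.
rewrite -(fsbig_widen r s) //; last first.
  by move=> v [_ nrv]; rewrite /= /bc; case: asboolP.
rewrite (eq_fsbigr (fun=> (cardr r)^-1 * 1)); last first.
  by move=> v; rewrite inE /bc => rv; case: asboolP; rewrite ?mulr1.
rewrite -mulr_fsumr -/(cardr r) mulVf //.
by rewrite gt_eqF // cardr_gt0.
Qed.

Lemma sdiff_fin (S : set (set V)) : sdiff X A S -> finite_set S.
Proof. by case. Qed.

Lemma sdiff_X (S : set (set V)) : sdiff X A S -> X (\bigcup_(r in S) r).
Proof. by case=> _ [_ []]. Qed.

Lemma sdiff_VV (S : set (set V)) : sdiff X A S -> S `<=` VV.
Proof. by case=> _ [_ []]. Qed.

Lemma hh_expand (T : set V -> R) (S : set (set V)) v :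
  finite_set S -> supp T `<=` S ->
  hh T v = \sum_(r \in S) T r * bc r v.
Proof.
move=> fS TS; rewrite /hh; apply: fsbig_widen => // r [_ nr].
by rewrite /= (not_supp nr) mul0r.
Qed.

Lemma supp_hh (T : set V -> R) : realization (sdiff X A) T ->
  supp (hh T) = \bigcup_(r in supp T) r.
Proof.
move=> [T0 [sT _]]; have fT := sdiff_fin sT.
have SV := sdiff_VV sT.
have term0 r v : 0 <= T r * bc r v by rewrite mulr_ge0 // bc_ge0.
apply/seteqP; split => v.
  rewrite /supp /= => hv.
  have : 0 < hh T v.
    rewrite lt_neqAle eq_sym hv /hh; apply: fsumr_ge0 => r _; exact: term0.
  rewrite /hh => /(@fsumr_gt0 R (set V) [::]) [r Tr].
  rewrite /bc; case: asboolP => [rv _|_]; last by rewrite mulr0 ltxx.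
  by exists r.
move=> [r Tr rv]; rewrite /supp /= gt_eqF //.
apply: (lt_le_trans _ (@fsum_ge_term R (set V) (supp T) (fun r => T r * bc r v) r fT Tr _)).
  rewrite mulr_gt0 //; first exact: supp_ge0.
  by apply: bc_gt0 => //; apply: VV_fin; apply: SV.
by move=> j _; apply: term0.
Qed.

Lemma hh_ge0 (T : set V -> R) v : realization (sdiff X A) T -> 0 <= hh T v.
Proof.
move=> [T0 _]; apply: fsumr_ge0 => r _; by rewrite mulr_ge0 // bc_ge0.
Qed.

Lemma hh_diff (T : set V -> R) : realization (sdiff X A) T -> diff_space X A (hh T).
Proof.
move=> rT; have [T0 [sT s1]] := rT; have fT := sdiff_fin sT.
have SV := sdiff_VV sT; have XU := sdiff_X sT.
have fU : finite_set (\bigcup_(r in supp T) r) by apply: X_fin.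
split.
  split; first by move=> v; apply: hh_ge0.
  rewrite supp_hh //; split => //.
  under eq_fsbigr do rewrite /hh.
  rewrite exchange_fsbig //.
  rewrite -s1; apply: eq_fsbigr => r; rewrite inE => Tr.
  rewrite -mulr_fsumr sum_bc ?mulr1 //.
    by move=> v rv; exists r.
  by apply: VV_n0; apply: SV.
move=> [_ [AhT _]]; rewrite supp_hh // in AhT.
have [r Tr] := sT.2.1.
apply: (VV_nA (SV _ Tr)); apply: (A_face AhT).
  by move=> v rv; exists r.
by apply: VV_n0; apply: SV.
Qed.

Let hsa := simplex_act_ga hG.

Lemma X_act_imp (K : set (set V)) g r :
  preserves_complex act K -> K (act g @` r) -> K r.
Proof.
move=> hK Kr; have := hK (g^-1)%g _ Kr.
by rewrite (gimage_actK hG).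
Qed.

Lemma VV_act1 g r : VV r -> VV (act g @` r).
Proof.
move=> [Xr [nAr mr]]; split; first exact: hPX.
split; first by move=> /(X_act_imp hPA).
move=> t Xt nAt tr.
have h1 : act (g^-1)%g @` t `<=` r.
  by move=> v [w tw <-]; have := tr _ tw => /(gimage_actE hG).
have := mr _ (hPX (g^-1)%g Xt) (fun Ag => nAt (X_act_imp hPA Ag)) h1.
move=> e; rewrite -e; have := gimage_actK hG (g^-1)%g t; rewrite invgK.
by move=> ->.
Qed.

Lemma VV_act g r : VV (simplex_act act g r) <-> VV r.
Proof.
split; last exact: VV_act1.
move=> h; have := VV_act1 (g^-1)%g h; by rewrite /simplex_act (gimage_actK hG).
Qed.

Lemma set_inj_act g (P : set V) : set_inj P (act g).
Proof. by move=> x y _ _; apply: (gact_inj hG). Qed.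

Lemma mm_act g r t : mm r (real_act act g t) = mm (simplex_act act (g^-1)%g r) t.
Proof.
rewrite /mm; have e : `[< VV r >] = `[< VV (simplex_act act (g^-1)%g r) >].
  by apply: asbool_equiv_eq; rewrite VV_act.
rewrite -e; case: asboolP => // _.
by rewrite /simplex_act fsbig_image //; apply: set_inj_act.
Qed.

Lemma sa_bij g : bijective (simplex_act act g).
Proof.
exists (simplex_act act (g^-1)%g) => r; first by rewrite (gactVK hsa).
by rewrite (gactKV hsa).
Qed.

Lemma DD_act g t : DD (real_act act g t) = DD t.
Proof.
rewrite /DD; under eq_fsbigr do rewrite mm_act.
by rewrite -(reindex_fsbigT (simplex_act act (g^-1)%g) (fun r => mm r t)) //; apply: sa_bij.
Qed.

Lemma ff_equiv g t : ff (real_act act g t) = real_act (simplex_act act) g (ff t).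
Proof.
by apply/funext => r; rewrite /ff mm_act DD_act /real_act.
Qed.

Lemma cardr_act g r : cardr (act g @` r) = cardr r.
Proof. by rewrite /cardr fsbig_image //; apply: set_inj_act. Qed.

Lemma bc_act g r w : bc (act g @` r) w = bc r (act (g^-1)%g w).
Proof.
rewrite /bc cardr_act; have e : `[< (act g @` r) w >] = `[< r (act (g^-1)%g w) >].
  by apply: asbool_equiv_eq; apply: gimage_actE.
by rewrite e.
Qed.

Lemma hh_equiv g T : hh (real_act (simplex_act act) g T) = real_act act g (hh T).
Proof.
apply/funext => w; rewrite /hh /real_act (supp_real_act hsa).
rewrite fsbig_image; last by move=> x y _ _; apply: (gact_inj hsa).
apply: eq_fsbigr => r _; rewrite (gactVK hsa) /simplex_act bc_act //.
Qed.

Lemma ff_cvg (T : Type) (F : set_system T) {FF : Filter F} (phi : T -> V -> R)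
  (x : V -> R) (s : set V) r :
  finite_set s -> supp x `<=` s -> (\forall t \near F, supp (phi t) `<=` s) ->
  (forall v, (fun t => phi t v) @ F --> x v) -> DD x != 0 ->
  (fun t => ff (phi t) r) @ F --> ff x r.
Proof.
move=> fs xs hn hc D0.
have mc r' : (fun t => mm r' (phi t)) @ F --> mm r' x.
  rewrite /mm; case: asboolP => Vr; last exact: cvg_cst.
  have e (y : V -> R) : \big[*%R/1]_(v \in r') y v = \prod_(v <- finmap.enum_fset (fset_set r')) y v.
    by apply: fsbig_finite; apply: VV_fin.
  under eq_fun do rewrite e.
  rewrite e; exact: cvg_bigprod_seq.
have Dc : (fun t => DD (phi t)) @ F --> DD x.
  have e : {near F, (fun t => \sum_(r' <- finmap.enum_fset (fset_set [set r' : set V | r' `<=` s]))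
      mm r' (phi t)) =1 (fun t => DD (phi t))}.
    apply: filterS hn => t ts; rewrite (DD_expand fs ts) fsbig_finite //.
    exact: pow_fin.
  apply: cvg_trans (near_eq_cvg e) _.
  rewrite (DD_expand fs xs) fsbig_finite; last exact: pow_fin.
  exact: cvg_bigsum_seq.
rewrite /ff; exact: (cvgM (mc r) (cvgV D0 Dc)).
Qed.

Lemma hh_cvg (T : Type) (F : set_system T) {FF : Filter F}
  (phi : T -> set V -> R) (T0 : set V -> R) (S : set (set V)) w :
  finite_set S -> supp T0 `<=` S -> (\forall t \near F, supp (phi t) `<=` S) ->
  (forall r, (fun t => phi t r) @ F --> T0 r) ->
  (fun t => hh (phi t) w) @ F --> hh T0 w.
Proof.
move=> fS TS hn hc.
have e : {near F, (fun t => \sum_(r <- finmap.enum_fset (fset_set S)) phi t r * bc r w) =1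
    (fun t => hh (phi t) w)}.
  by apply: filterS hn => t ts; rewrite (hh_expand w fS ts) fsbig_finite.
apply: cvg_trans (near_eq_cvg e) _.
rewrite (hh_expand w fS TS) fsbig_finite //.
by apply: cvg_bigsum_seq => r; apply: cvgM => //; exact: cvg_cst.
Qed.

Lemma nA_super (t s : set V) : ~ A t -> t `<=` s -> t !=set0 -> ~ A s.
Proof. by move=> nAt ts t0 As; apply: nAt; apply: A_face As ts t0. Qed.

Lemma diff_of (y : V -> R) (t : set V) : realization X y -> ~ A t -> t `<=` supp y ->
  t !=set0 -> diff_space X A y.
Proof.
move=> ry nAt ty t0; split => // [[_ [Ay _]]].
by apply: (nA_super nAt ty t0).
Qed.

Lemma diff_open sg x : X sg -> diff_space X A x -> closed_simplex X sg x ->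
  exists2 d : R, 0 < d & forall y, closed_simplex X sg y ->
    (forall v, sg v -> `|y v - x v| < d) -> diff_space X A y.
Proof.
move=> Xsg dx xcl.
have FF := ballP_filter (closed_simplex X sg) sg x.
have hn : \forall y \near fil (ballP (closed_simplex X sg) sg x),
    forall v, supp x v -> 0 < y v.
  apply: finite_near; first exact: diff_fin.
  move=> v sxv; have [[x0 _] _] := dx.
  have xv0 : 0 < x v by apply: supp_ge0.
  have := @ballP_coord R V X (closed_simplex X sg) sg x v (fun _ h => h) xcl.
  move/cvgrPdist_lt => /(_ (x v) xv0); apply: filterS => y.
  by rewrite ltr_norml => /andP[h1 h2]; lra.
have [d d0 hd] := hn; exists d => // y ycl hy.
have [ry _] := ycl.
have xy : supp x `<=` supp y.
  move=> v sxv; have := hd y (conj ycl hy) v sxv.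
  by rewrite /supp /= => h; rewrite gt_eqF.
apply: (diff_of ry (diff_nA dx) xy).
by have [_ [Xx _]] := dx.1; case: (hX.1 _ Xx).
Qed.

Lemma sdiff_complex : is_simplicial_complex (sdiff X A).
Proof.
split; first by move=> S [fS [S0 _]].
move=> S T [fS [S0 [SV XU]]] TS T0; split; first exact: sub_finite_set fS.
split => //; split; first exact: subset_trans TS SV.
apply: (hX.2 _ _ XU); first by move=> v [r Tr rv]; exists r => //; apply: TS.
have [r Tr] := T0; have [v rv] := VV_n0 (SV _ (TS _ Tr)).
by exists v; exists r.
Qed.

Lemma cont_ff : cont (diff_space X A) (sub_open (realization_open X) (diff_space X A))
  (realization (sdiff X A))
  (sub_open (realization_open (sdiff X A)) (realization (sdiff X A))) ff.
Proof.
apply: (cont_gen (K1:=X) sdiff_complex).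
- by move=> x [].
- move=> sg x Ksg dx xcl; exact: diff_open.
- done.
- move=> x dx; exact: ff_real.
- move=> sg x Xsg dx xcl; exists [set r | VV r /\ r `<=` sg]; split.
    apply: sdiff_cl.
    + by apply: (sub_finite_set _ (pow_fin (X_fin Xsg))) => r [] _ h.
    + have [r [Vr rs]] := exists_VV (real_X dx.1) (diff_nA dx).
      by exists r; split => //; apply: subset_trans rs xcl.2.
    + by move=> r [].
    + by exists sg; split => // v [r [_ rs] rv]; apply: rs.
  move=> y dy ycl; rewrite supp_ff // => r [Vr rs]; split => //.
  exact: subset_trans rs ycl.2.
- move=> sg x Xsg dx xcl r.
  apply: (ff_cvg (s:=sg)).
  + exact: X_fin.
  + exact: xcl.2.
  + by apply: (ballP_supp (K1:=X)) => y [].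
  + by move=> v; apply: (ballP_coord (K1:=X)) => // y [].
  + by rewrite gt_eqF // DD_gt0.
Qed.

Lemma cont_hh : cont (realization (sdiff X A))
  (sub_open (realization_open (sdiff X A)) (realization (sdiff X A)))
  (diff_space X A) (sub_open (realization_open X) (diff_space X A)) hh.
Proof.
apply: (cont_gen (K1:=sdiff X A) hX).
- done.
- by move=> sg x _ _ _; exists 1 => // y [].

- by move=> y [].
- move=> x rx; exact: hh_diff.
- move=> sg x Ksg rx xcl; exists (\bigcup_(r in sg) r); split; first exact: sdiff_X.
  move=> y ry ycl; rewrite supp_hh // => v [r ryr rv]; exists r => //.
  exact: ycl.2.
- move=> sg x Ksg rx xcl w; apply: (hh_cvg (S:=sg)).
  + exact: sdiff_fin.
  + exact: xcl.2.
  + by apply: (ballP_supp (K1:=sdiff X A)) => y [].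
  + by move=> r; apply: (ballP_coord (K1:=sdiff X A)) => // y [].
Qed.

Definition H1 (p : R * (V -> R)) : V -> R := conv p.1 (hh (ff p.2)) p.2.
Definition H2 (p : R * (set V -> R)) : set V -> R := conv p.1 (ff (hh p.2)) p.2.

Lemma supp_hhff (x : V -> R) : diff_space X A x -> supp (hh (ff x)) `<=` supp x.
Proof.
move=> dx; rewrite supp_hh; last exact: ff_real.
by move=> v [r]; rewrite supp_ff // => -[_ rs] rv; apply: rs.
Qed.

Lemma hhff_cl (x : V -> R) sg : diff_space X A x -> supp x `<=` sg ->
  closed_simplex X sg (hh (ff x)).
Proof.
move=> dx xs; split; first exact: (hh_diff (ff_real dx)).1.
exact: subset_trans (supp_hhff dx) xs.
Qed.

Lemma H1_diff s x : 0 <= s <= 1 -> diff_space X A x ->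
  diff_space X A (H1 (s, x)) /\ supp (H1 (s, x)) `<=` supp x.
Proof.
move=> s01 dx; have [rx _] := dx.
have [rc sc hx' hy'] := conv_real hX (real_X rx) s01 (hhff_cl dx (fun _ h => h))
  (real_supp_cl rx).
split => //.
have dh := hh_diff (ff_real dx).
have [hs|hs] := ltP s 1.
  apply: (diff_of rc (diff_nA dh) (hx' hs)).
  by have [_ [Xh _]] := dh.1; case: (hX.1 _ Xh).
have s0 : 0 < s by move: s01 => /andP[]; lra.
apply: (diff_of rc (diff_nA dx) (hy' s0)).
by case: (hX.1 _ (real_X rx)).
Qed.

Lemma cont_H1 : cont (cyl (diff_space X A))
  (cyl_open (diff_space X A) (sub_open (realization_open X) (diff_space X A)))
  (diff_space X A) (sub_open (realization_open X) (diff_space X A)) H1.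
Proof.
apply: (cyl_gen (K1:=X) hX).
- by move=> x [].
- move=> sg x Ksg dx xcl; exact: diff_open.
- by move=> x [].
- by move=> s x s01 dx; case: (H1_diff s01 dx).
- move=> sg x Xsg dx xcl; exists sg; split => // s y s01 dy ycl.
  exact: subset_trans (H1_diff s01 dy).2 ycl.2.
- move=> sg s x Xsg s01 dx xcl w.
  rewrite /H1 /conv /=.
  have FF := cballP_filter (diff_space X A `&` closed_simplex X sg) sg s x.
  apply: conv_cvg.
  + exact: cballP_fst.
  + apply: (hh_cvg (S:=[set r | VV r /\ r `<=` sg])).
    * by apply: (sub_finite_set _ (pow_fin (X_fin Xsg))) => r [] _ h.
    * by rewrite supp_ff // => r [Vr rs]; split => //; apply: subset_trans rs xcl.2.
    * apply: filterS (cballP_in _ _ _ _) => p [[dp pcl] _].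
      by rewrite supp_ff // => r [Vr rs]; split => //; apply: subset_trans rs pcl.2.
    * move=> r; apply: (ff_cvg (s:=sg) (phi := fun p : R * (V -> R) => p.2)).
      -- exact: X_fin.
      -- exact: xcl.2.
      -- by apply: (cballP_supp (K1:=X)) => y [].
      -- by move=> v; apply: (cballP_coord (K1:=X)) => // y [].
      -- by rewrite gt_eqF // DD_gt0.
  + by apply: (cballP_coord (K1:=X)) => // y [].
Qed.

Definition Sig (sg : set (set V)) : set (set V) :=
  [set r | VV r /\ r `<=` \bigcup_(q in sg) q].

Lemma sdiff_Sig sg : sdiff X A sg -> sdiff X A (Sig sg).
Proof.
move=> Ssg; have XU := sdiff_X Ssg; apply: sdiff_cl.
- by apply: (sub_finite_set _ (pow_fin (X_fin XU))) => r [] _ h.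
- have [r sr] := Ssg.2.1; exists r; split; first exact: (sdiff_VV Ssg).
  by move=> v rv; exists r.
- by move=> r [].
- by exists (\bigcup_(q in sg) q); split => // v [r [_ rs] rv]; apply: rs.
Qed.

Lemma ffhh_cl (T : set V -> R) sg : realization (sdiff X A) T -> supp T `<=` sg ->
  closed_simplex (sdiff X A) (Sig sg) (ff (hh T)).
Proof.
move=> rT Ts; have dh := hh_diff rT; split; first exact: ff_real.
rewrite supp_ff // supp_hh // => r [Vr rs]; split => //.
move=> v /rs [q Tq qv]; exists q => //; exact: Ts.
Qed.

Lemma T_cl (T : set V -> R) sg : realization (sdiff X A) T -> supp T `<=` sg ->
  closed_simplex (sdiff X A) (Sig sg) T.
Proof.
move=> rT Ts; split => // r Tr; split; first exact: (sdiff_VV rT.2.1).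
by move=> v rv; exists r => //; exact: Ts.
Qed.

Lemma H2_real s T : 0 <= s <= 1 -> realization (sdiff X A) T ->
  realization (sdiff X A) (H2 (s, T)).
Proof.
move=> s01 rT.
have [rc _ _ _] := conv_real sdiff_complex (sdiff_Sig rT.2.1) s01
  (ffhh_cl rT (fun _ h => h)) (T_cl rT (fun _ h => h)).
exact: rc.
Qed.

Lemma cont_H2 : cont (cyl (realization (sdiff X A)))
  (cyl_open (realization (sdiff X A))
     (sub_open (realization_open (sdiff X A)) (realization (sdiff X A))))
  (realization (sdiff X A))
  (sub_open (realization_open (sdiff X A)) (realization (sdiff X A))) H2.
Proof.
apply: (cyl_gen (K1:=sdiff X A) sdiff_complex).
- done.
- by move=> sg x _ _ _; exists 1 => // y [].
- done.
- by move=> s x s01 rx; apply: H2_real.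
- move=> sg x Ssg rx xcl; exists (Sig sg); split; first exact: sdiff_Sig.
  move=> s y s01 ry ycl.
  have [_ sc _ _] := conv_real sdiff_complex (sdiff_Sig Ssg) s01
    (ffhh_cl ry ycl.2) (T_cl ry ycl.2).
  exact: sc.
- move=> sg s x Ssg s01 rx xcl r.
  rewrite /H2 /conv /=.
  have FF := cballP_filter (realization (sdiff X A) `&` closed_simplex (sdiff X A) sg) sg s x.
  have fU : finite_set (\bigcup_(q in sg) q) by apply: X_fin; exact: sdiff_X.
  apply: conv_cvg.
  + exact: cballP_fst.
  + apply: (ff_cvg (s:=\bigcup_(q in sg) q) (phi := fun p : R * (set V -> R) => hh p.2)).
    * exact: fU.
    * by rewrite supp_hh // => v [q xq qv]; exists q => //; apply: xcl.2.
    * apply: filterS (cballP_in _ _ _ _) => p [[rp pcl] _].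
      by rewrite supp_hh // => v [q pq qv]; exists q => //; apply: pcl.2.
    * move=> v; apply: (hh_cvg (S:=sg) (phi := fun p : R * (set V -> R) => p.2)).
      -- exact: sdiff_fin.
      -- exact: xcl.2.
      -- by apply: (cballP_supp (K1:=sdiff X A)) => y [].
      -- by move=> q; apply: (cballP_coord (K1:=sdiff X A)) => // y [].
    * by rewrite gt_eqF // DD_gt0 //; apply: hh_diff.
  + by apply: (cballP_coord (K1:=sdiff X A)) => // y [].
Qed.

Lemma ro_sub (W : choiceType) (K : set (set W)) :
  realization_open K = sub_open (realization_open K) (@realization R W K).
Proof.
apply/funext => U; apply/propext; split.
  move=> hU; exists U; split => //; apply/seteqP; split => [x Ux|x [] //].
  by split => //; exact: hU.1.
move=> [U' [[hU'1 hU'2] ->]]; split; first by move=> x [].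
move=> s Ks t tcl [U't rt]; have [e [e0 he]] := hU'2 s Ks t tcl U't.
exists e; split => // u ucl hu; split; [exact: he | exact: ucl.1].
Qed.

Lemma main_equiv : @G_homotopy_equivalent R G (V -> R) (set V -> R)
    (diff_space X A) (sub_open (realization_open X) (diff_space X A))
    (real_act act)
    (realization (sdiff X A)) (realization_open (sdiff X A))
    (real_act (simplex_act act)).
Proof.
rewrite (ro_sub (sdiff X A)).
exists ff, hh; split; first exact: cont_ff.
split; first exact: cont_hh.
split; first by move=> g x dx; exact: ff_equiv.
split; first by move=> g T rT; exact: hh_equiv.
split.
  exists H1; split; first exact: cont_H1.
  split.
    move=> x dx; split; apply/funext => v; rewrite /H1 /conv /=.
      by rewrite subr0 mul1r mul0r addr0.
    by rewrite subrr mul0r add0r mul1r.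
  move=> g s x s01 dx; rewrite /H1 /= ff_equiv hh_equiv.
  by apply/funext => v; rewrite /conv /real_act.
exists H2; split; first exact: cont_H2.
split.
  move=> x dx; split; apply/funext => v; rewrite /H2 /conv /=.
    by rewrite subr0 mul1r mul0r addr0.
  by rewrite subrr mul0r add0r mul1r.
move=> g s x s01 dx; rewrite /H2 /= hh_equiv ff_equiv.
by apply/funext => v; rewrite /conv /real_act.
Qed.

End Main.

Theorem theorem4p8 (R : realType) (V : choiceType) (G : finGroupType)
  (X A : set (set V)) (act : G -> V -> V) :
  is_simplicial_complex X ->
  is_subcomplex A X ->
  is_group_action act ->
  preserves_complex act X ->
  preserves_complex act A ->
  @G_homotopy_equivalent R G (V -> R) (set V -> R)
    (diff_space X A) (sub_open (realization_open X) (diff_space X A))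
    (real_act act)
    (realization (sdiff X A)) (realization_open (sdiff X A))
    (real_act (simplex_act act)).
Proof. by move=> hX hA hG hPX hPA; apply: main_equiv. Qed.
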